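(* Let $\mathcal{T}$ be a single-elimination tournament and $\mathcal{B}$ a set of brackets of $\mathcal{T}$. If there exist two distinct players $a,b$ such that $B_i(x_{a,b})\notin\{a,b\}$ for every $B_i\in\mathcal{B}$, then $\mathcal{B}$ is not $\sigma$-resolving for any scoring system $\sigma$.
   Context: A single-elimination tournament is a finite directed graph $\mathcal{T}$ such that: (a) $\mathcal{T}$ has exactly one sink (vertex with no out-neighbours); (b) every non-sink vertex has exactly one out-neighbour; (c) $\mathcal{T}$ has no directed cycles; (d) $|N^-(v)|\ne 1$ for every vertex $v$, where $N^-(v)$ denotes the set of in-neighbours of $v$. The players $P(\mathcal{T})$ are the sources and the matches are $M(\mathcal{T})=V(\mathcal{T})\setminus P(\mathcal{T})$. For a vertex $u$, $P(u)$ is the set of players $a$ for which there is a directed walk from $a$ to $u$ (length $0$ allowed). For distinct players $a,b$, $x_{a,b}$ denotes the unique match $x$ having in-neighbours $u_a,u_b\in N^-(x)$ with $P(u_a)\cap\{a,b\}=\{a\}$ and $P(u_b)\cap\{a,b\}=\{b\}$ (such a match exists and is unique). A bracket is a function $B:V(\mathcal{T})\to P(\mathcal{T})$ with $B(a)=a$ for every player $a$ and $B(x)\in\{B(u):u\in N^-(x)\}$ for every match $x$. A scoring system is any function $\sigma:M(\mathcal{T})\to\mathbb{R}_{>0}$. For brackets $B,B'$ let $\mathrm{score}_\sigma(B,B')=\sum_{x\in M(\mathcal{T}):\,B(x)=B'(x)}\sigma(x)$. A set of brackets $\mathcal{B}$ is $\sigma$-resolving if for every pair of distinct brackets $B\ne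 B'$ there is $B_i\in\mathcal{B}$ with $\mathrm{score}_\sigma(B_i,B)\ne\mathrm{score}_\sigma(B_i,B')$. *)

(* Defs.v *)
From HB Require Import structures.
From mathcomp Require Import all_boot all_order all_algebra.
From mathcomp Require Import reals.
Set Implicit Arguments. Unset Strict Implicit. Unset Printing Implicit Defensive.
Import Order.TTheory GRing.Theory Num.Theory.

Section Tournament.
Variables (V : finType) (e : rel V).

Definition is_sink (v : V) : bool := [forall w, ~~ e v w].

Definition is_SET : Prop :=
  [/\ #|[set v | is_sink v]| = 1%N,
      forall v, ~~ is_sink v -> #|[set w | e v w]| = 1%N,
      forall v, ~~ [exists w, e v w && connect e w v]
    & forall v, #|[set u | e u v]| != 1%N].

Definition is_player (v : V) : bool := [forall u, ~~ e u v].
Definition is_match (v : V) : bool := ~~ is_player v.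

Definition Pset (u : V) : {set V} := [set a | is_player a && connect e a u].

Definition is_xab (a b x : V) : bool :=
  is_match x &&
  [exists ua, exists ub,
     [&& e ua x, e ub x,
         Pset ua :&: [set a; b] == [set a] &
         Pset ub :&: [set a; b] == [set b]]].

Definition is_bracket (B : {ffun V -> V}) : Prop :=
  (forall a, is_player a -> B a = a) /\
  (forall x, is_match x -> exists2 u, e u x & B x = B u).

Definition score (R : numDomainType) (sigma : V -> R) (B B' : {ffun V -> V}) : R :=
  (\sum_(x | is_match x && (B x == B' x)) sigma x)%R.

Definition resolving (R : numDomainType) (sigma : V -> R)
  (Bs : {set {ffun V -> V}}) : Prop :=
  forall B B', is_bracket B -> is_bracket B' -> B != B' ->
    exists2 Bi, Bi \in Bs & score sigma Bi B != score sigma Bi B'.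

End Tournament.

(* Main.v *)
Require Import Defs.
From HB Require Import structures.
From mathcomp Require Import all_boot all_order all_algebra.
From mathcomp Require Import reals.
From mathcomp Require Import zify.
Import Order.TTheory GRing.Theory Num.Theory.
Set Implicit Arguments. Unset Strict Implicit.

Section Aux.
Variables (V : finType) (e : rel V).

Lemma conn_last u v : connect e u v -> u != v -> exists2 w, e w v & connect e u w.
Proof.
move=> /connectP [p]; elim/last_ind: p => [|p y _] /=.
  by move=> _ ->; rewrite eqxx.
rewrite rcons_path last_rcons => /andP [hp he] -> _.
exists (last u p) => //; apply/connectP; by exists p.
Qed.

Lemma player_conn p u : is_player e p -> connect e u p -> u = p.
Proof.
move=> hp hc; apply/eqP; apply/negPn/negP => hne.
have [w hw _] := conn_last hc hne.
by move/forallP: hp => /(_ w); rewrite hw.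
Qed.

Lemma match_in v : is_match e v -> exists u, e u v.
Proof.
rewrite /is_match /is_player negb_forall => /existsP [u]; rewrite negbK => h.
by exists u.
Qed.

Variable g : V -> V.
Hypothesis hg1 : forall v, is_player e v -> g v = v.
Hypothesis hg2 : forall v, is_match e v -> e (g v) v.
Hypothesis hc : forall v, ~~ [exists w, e v w && connect e w v].

Lemma iter_fixp k v : is_player e v -> iter k g v = v.
Proof. by move=> hv; elim: k => //= k ->; apply: hg1. Qed.

Lemma iter_player v : is_player e (iter #|V| g v).
Proof.
apply/negPn/negP => hN.
set N := #|V|.
have hk : forall k, k <= N -> is_match e (iter k g v).
  move=> k hk; apply/negP => hp; move/negP: hN; apply.
  change (is_player e (iter N g v)); by rewrite -(subnK hk) iterD iter_fixp.
have hE : forall k, k < N -> e (iter k.+1 g v) (iter k g v).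
  by move=> k hk'; rewrite iterS; apply: hg2; apply: hk; apply: ltnW.
have hC : forall d n, n + d <= N -> connect e (iter (n + d) g v) (iter n g v).
  move=> d n; elim: d => [|d IH] hnd; first by rewrite addn0 connect0.
  apply: connect_trans (IH _); last by lia.
  rewrite addnS; apply: connect1; apply: hE; lia.
pose f := fun i : 'I_N.+1 => iter i g v.
have finj : injective f.
  have key : forall i j : 'I_N.+1, i < j -> f i = f j -> False.
    move=> i j hij hf.
    move: (hc (iter i.+1 g v)); rewrite negb_exists => /forallP /(_ (iter i g v)).
    rewrite hE; last by have := ltn_ord j; lia.
    move=> H; move/negP: H; apply.
    have h1 := hC (j - i.+1) i.+1; rewrite subnKC in h1 => //.
    rewrite /f in hf; rewrite {1}hf; apply: h1; have := ltn_ord j; lia.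
  move=> i j hf; apply/eqP; case: (ltngtP i j) => h.
  - by case: (key _ _ h hf).
  - by case: (key _ _ h (esym hf)).
  - by apply/eqP; apply: val_inj.
have := leq_card f finj; rewrite card_ord; lia.
Qed.

End Aux.

Lemma iter_inv (V : finType) (g : V -> V) (P : pred V) k v :
  (forall w, P w -> P (g w)) -> P v -> P (iter k g v).
Proof. by move=> h hv; elim: k => //= k IH; apply: h. Qed.

Theorem proposition4p3 (V : finType) (e : rel V) (Bs : {set {ffun V -> V}})
  (a b : V) :
  is_SET e ->
  (forall B, B \in Bs -> is_bracket e B) ->
  is_player e a -> is_player e b -> a != b ->
  (exists x, is_xab e a b x /\ forall Bi, Bi \in Bs -> Bi x \notin [set a; b]) ->
  forall (R : realType) (sigma : V -> R),
    (forall x, is_match e x -> (0 < sigma x)%R) ->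
    ~ resolving e sigma Bs.
Proof.
move=> hSET _ pa pb ab [x [hx hBi]] R sigma _ hres.
case: hSET => _ _ hc hd.
have cyc : forall u w, e u w -> connect e w u -> False.
  by move=> u w h1 h2; move: (hc u) => /existsP; apply; exists w; rewrite h1.
move: hx => /andP [xm /existsP [ua /existsP [ub /and4P [eua eub hPa hPb]]]].
have ca : connect e a ua.
  have : a \in Pset e ua :&: [set a; b] by rewrite (eqP hPa) set11.
  by rewrite inE /Pset inE => /andP [/andP [_ ->]].
have cb : connect e b ub.
  have : b \in Pset e ub :&: [set a; b] by rewrite (eqP hPb) set11.
  by rewrite inE /Pset inE => /andP [/andP [_ ->]].
have ncba : ~~ connect e b ua.
  have : b \notin Pset e ua :&: [set a; b] by rewrite (eqP hPa) inE eq_sym.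
  by rewrite inE /Pset inE pb !inE eqxx orbT andbT.
have ncab : ~~ connect e a ub.
  have : a \notin Pset e ub :&: [set a; b] by rewrite (eqP hPb) inE.
  by rewrite inE /Pset inE pa !inE eqxx andbT.
pose Ra := [pred v | connect e a v && connect e v ua].
pose Rb := [pred v | connect e b v && connect e v ub].
have xRa : x \notin Ra.
  by apply/negP => /andP [_ h]; apply: (cyc ua x).
have xRb : x \notin Rb.
  by apply/negP => /andP [_ h]; apply: (cyc ub x).
have dis : forall v, v \in Ra -> v \in Rb -> False.
  move=> v /andP [_ h1] /andP [h2 _]; move/negP: ncba; apply.
  exact: connect_trans h2 h1.
pose P v u := [&& e u v, u != x, (v \in Ra) ==> (u \in Ra) & (v \in Rb) ==> (u \in Rb)].
have Pex : forall v, is_match e v -> v != x -> exists u, P v u.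
  move=> v vm vx.
  case vRa : (v \in Ra).
    have va : a != v by apply/eqP => av; move: vm; rewrite /is_match -av pa.
    move: (vRa) => /andP [h1 h2].
    have [w hw cw] := conn_last h1 va.
    have wRa : w \in Ra by rewrite inE cw /=; exact: connect_trans (connect1 hw) h2.
    have vRb : (v \in Rb) = false by apply/negP => h; apply: (dis v) => //; rewrite vRa.
    exists w; apply/and4P; split => //; last by rewrite vRb.
      by apply/eqP => wx; move: xRa; rewrite -wx wRa.
    by rewrite wRa implybT.
  case vRb : (v \in Rb).
    have vb : b != v by apply/eqP => bv; move: vm; rewrite /is_match -bv pb.
    move: (vRb) => /andP [h1 h2].
    have [w hw cw] := conn_last h1 vb.
    have wRb : w \in Rb by rewrite inE cw /=; exact: connect_trans (connect1 hw) h2.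
    exists w; apply/and4P; split => //; last by rewrite wRb implybT.
      by apply/eqP => wx; move: xRb; rewrite -wx wRb.
    by rewrite vRa.
  rewrite /P /=.
  case: (pickP [pred u | e u v && (u != x)]) => [u /andP [h1 h2] | hnone].
    by exists u; rewrite h1 h2 vRa vRb.
  have [u0 hu0] := match_in vm.
  have hs : [set u | e u v] = [set x].
    apply/setP => u; rewrite !inE.
    case: (eqVneq u x) => [-> | ux].
      move: (hnone u0) => /=; rewrite hu0 /= => /negbT; rewrite negbK => /eqP <-.
      by rewrite hu0.
    by move: (hnone u) => /=; rewrite ux andbT.
  by move: (hd v); rewrite hs cards1.
pose g v := if is_player e v then v else if v == x then ua
            else odflt v [pick u | P v u].
have hgP : forall v, is_match e v -> v != x -> P v (g v).
  move=> v vm vx; rewrite /g (negbTE vm) (negbTE vx).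
  case: pickP => [u hu //| hn].
  by have [u hu] := Pex v vm vx; move: (hn u); rewrite hu.
have hg1 : forall v, is_player e v -> g v = v by move=> v hv; rewrite /g hv.
have gx : g x = ua by rewrite /g (negbTE xm) eqxx.
have hg2 : forall v, is_match e v -> e (g v) v.
  move=> v vm; case: (eqVneq v x) => [-> | vx]; first by rewrite gx.
  by case/and4P: (hgP v vm vx).
have gnx : forall v, v != x -> g v != x.
  move=> v vx; case vp: (is_player e v); first by rewrite hg1.
  have vm : is_match e v by rewrite /is_match vp.
  by case/and4P: (hgP v vm vx).
have gRa : forall v, v \in Ra -> g v \in Ra.
  move=> v vR; case vp: (is_player e v); first by rewrite hg1.
  have vm : is_match e v by rewrite /is_match vp.
  have vx : v != x by apply/eqP => vx; move: xRa; rewrite -vx vR.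
  by case/and4P: (hgP v vm vx) => _ _ /implyP h _; exact: h.
have gRb : forall v, v \in Rb -> g v \in Rb.
  move=> v vR; case vp: (is_player e v); first by rewrite hg1.
  have vm : is_match e v by rewrite /is_match vp.
  have vx : v != x by apply/eqP => vx; move: xRb; rewrite -vx vR.
  by case/and4P: (hgP v vm vx) => _ _ _ /implyP h; exact: h.
pose B := [ffun v => iter #|V| g v].
have Bpl : forall v, is_player e (B v) by move=> v; rewrite ffunE; apply: iter_player.
have BgE : forall v, is_match e v -> B (g v) = B v.
  move=> v vm; rewrite !ffunE -iterSr iterS hg1 //; exact: iter_player.
have Bua : B ua = a.
  have h : B ua \in Ra by rewrite ffunE; apply: iter_inv => //; apply/andP; split => //; apply: connect0.
  by move/andP: h => [h _]; apply/esym/(player_conn (Bpl ua) h).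
have Bub : B ub = b.
  have h : B ub \in Rb by rewrite ffunE; apply: iter_inv => //; apply/andP; split => //; apply: connect0.
  by move/andP: h => [h _]; apply/esym/(player_conn (Bpl ub) h).
have Bx : B x = a by rewrite -BgE // gx.
have ubx : ub != x by apply/eqP => h; apply: (cyc x x); [rewrite -{1}h | exact: connect0].
pose B' := [ffun v => if v == x then b else B v].
have brB : is_bracket e B.
  split; first by move=> p pp; rewrite ffunE (iter_fixp hg1).
  by move=> v vm; exists (g v); [apply: hg2 | rewrite BgE].
have brB' : is_bracket e B'.
  split.
    move=> p pp; rewrite ffunE.
    have -> : (p == x) = false by apply/negP => /eqP px; move: xm; rewrite /is_match -px pp.
    by rewrite ffunE (iter_fixp hg1).
  move=> v vm; case: (eqVneq v x) => [-> | vx].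
    by exists ub => //; rewrite [B' x]ffunE eqxx [B' ub]ffunE (negbTE ubx) Bub.
  exists (g v); first by apply: hg2.
  have hB' : forall w, w != x -> B' w = B w by move=> w wx; rewrite ffunE (negbTE wx).
  by rewrite hB' // hB' ?gnx // BgE.
have BB' : B != B'.
  by apply/negP => /eqP /ffunP /(_ x); rewrite Bx [B' x]ffunE eqxx => /eqP; rewrite (negbTE ab).
have [Bi BiBs] := hres B B' brB brB' BB'.
apply/negP; rewrite negbK; apply/eqP; rewrite /score; apply: eq_bigl => v.
case: (eqVneq v x) => [-> | vx]; last by rewrite [B' v]ffunE (negbTE vx).
move: (hBi Bi BiBs); rewrite !inE negb_or => /andP [h1 h2].
by rewrite Bx (negbTE h1) [B' x]ffunE eqxx (negbTE h2) !andbF.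
Qed.
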